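(* Let $\Gamma$ be a distance-regular graph with diameter $D\ge3$ and $a_1\ne0$. Let $\sigma_0,\dots,\sigma_D$ be a nontrivial pseudo cosine sequence which is tight, with auxiliary parameter $\varepsilon$, and write $\sigma=\sigma_1$. Then (i) $\sigma_2\ne1$; (ii) $\varepsilon\sigma\ne1$; (iii) $\sigma_2\ne\varepsilon\sigma$; (iv) $\sigma_2\ne\sigma^2$.
   Context: $\Gamma$ is a finite connected undirected graph without loops or multiple edges, distance-regular with diameter $D$, intersection numbers $a_i,b_i,c_i$ ($c_0=0$, $b_D=0$), valency $k$, $c_i+a_i+b_i=k$. For $\theta\in\mathbb{R}$ the pseudo cosine sequence for $\theta$ is the sequence of reals $\sigma_0,\dots,\sigma_D$ with $\sigma_0=1$ and $c_i\sigma_{i-1}+a_i\sigma_i+b_i\sigma_{i+1}=\theta\sigma_i$ for $0\le i\le D-1$; nontrivial means $\sigma_1\ne1$. Pseudo cosine sequences $\sigma_i$, $\rho_i$ form a tight pair if $(\sigma_i\rho_i)_{i=0}^D$ is a pseudo cosine sequence. For a tight pair of nontrivial pseudo cosine sequences, an auxiliary parameter is a real $\varepsilon$ with $\sigma_i\rho_i-\sigma_{i-1}\rho_{i-1}=\varepsilon(\sigma_{i-1}\rho_i-\sigma_i\rho_{i-1})$ for $1\le i\le D$. When $a_1\ne0$, a nontrivial pseudo cosine sequence $\sigma_0,\dots,\sigma_D$ is tight if some nontrivial pseudo cosine sequence $\rho_0,\dots,\rho_D$ forms a tight pair with it; its auxiliary parameter is the (uniquely determined) auxiliary parameter of that pair.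 *)

(* Defs.v *)
From HB Require Import structures.
From mathcomp Require Import all_boot all_order all_algebra.
From mathcomp Require Import reals.
Set Implicit Arguments. Unset Strict Implicit. Unset Printing Implicit Defensive.
Import Order.TTheory GRing.Theory Num.Theory.
Local Open Scope ring_scope.

Fixpoint within (T : finType) (e : rel T) (n : nat) (x : T) : {set T} :=
  match n with
  | 0 => [set x]
  | n'.+1 => within e n' x :|: [set y | [exists z in within e n' x, e z y]]
  end.

Definition layer (T : finType) (e : rel T) (i : nat) (x : T) : {set T} :=
  [set y | (y \in within e i x) && ((i == 0)%N || (y \notin within e i.-1 x))].

Definition is_drg (T : finType) (e : rel T) (D : nat) (a b c : nat -> nat) : Prop :=
  symmetric e /\ irreflexive e /\
  (forall x y : T, y \in within e D x) /\
  (exists x y : T, y \in layer e D x) /\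
  c 0%N = 0%N /\ b D = 0%N /\
  (forall (i : nat) (x y : T), (i <= D)%N -> y \in layer e i x ->
     [/\ #|[set z in layer e i.-1 x | e y z]| = c i,
         #|[set z in layer e i x | e y z]| = a i &
         #|[set z in layer e i.+1 x | e y z]| = b i]).

(* ---------- Pseudo cosine sequences (sequences indexed 0..D; values beyond D are irrelevant) *)

Definition pseudo_cosine_for (R : realType) (D : nat) (a b c : nat -> nat)
    (theta : R) (s : nat -> R) : Prop :=
  s 0%N = 1 /\
  forall i : nat, (i < D)%N ->
    (c i)%:R * s i.-1 + (a i)%:R * s i + (b i)%:R * s i.+1 = theta * s i.
(* for i = 0, c_0 = 0 so the value s (0.-1) = s 0 is irrelevant *)

Definition pseudo_cosine (R : realType) (D : nat) (a b c : nat -> nat) (s : nat -> R) : Prop :=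
  exists theta : R, pseudo_cosine_for D a b c theta s.

Definition nontrivial_pcs (R : realType) (D : nat) (a b c : nat -> nat) (s : nat -> R) : Prop :=
  pseudo_cosine D a b c s /\ s 1%N != 1.

Definition tight_pair (R : realType) (D : nat) (a b c : nat -> nat) (s r : nat -> R) : Prop :=
  pseudo_cosine D a b c s /\ pseudo_cosine D a b c r /\
  pseudo_cosine D a b c (fun i => s i * r i).

Definition auxiliary_parameter (R : realType) (D : nat) (s r : nat -> R) (eps : R) : Prop :=
  forall i : nat, (1 <= i <= D)%N ->
    s i * r i - s i.-1 * r i.-1 = eps * (s i.-1 * r i - s i * r i.-1).

Definition tight_with_aux (R : realType) (D : nat) (a b c : nat -> nat)
    (s : nat -> R) (eps : R) : Prop :=
  nontrivial_pcs D a b c s /\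
  exists r : nat -> R, nontrivial_pcs D a b c r /\ tight_pair D a b c s r /\
                       auxiliary_parameter D s r eps.

(* Main.v *)
Require Import Defs.
From HB Require Import structures.
From mathcomp Require Import all_boot all_order all_algebra.
From mathcomp Require Import reals.
From mathcomp Require Import ring lra zify.
Import Order.TTheory GRing.Theory Num.Theory.
Set Implicit Arguments. Unset Strict Implicit.

Section G.
Variables (T : finType) (e : rel T).

Lemma within0 x y : (y \in within e 0 x) = (y == x).
Proof. by rewrite /= inE. Qed.

Lemma withinS n x y : (y \in within e n.+1 x) =
  (y \in within e n x) || [exists z in within e n x, e z y].
Proof. by rewrite /= !inE. Qed.

Lemma within_mono m n x y : (m <= n)%N -> y \in within e m x -> y \in within e n x.
Proof.
move=> mn hy; elim: n mn => [|n IH]; first by rewrite leqn0 => /eqP <-.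
rewrite leq_eqVlt => /orP [/eqP <- //|]; rewrite ltnS => /IH h.
by rewrite withinS h.
Qed.

Lemma within_step n x y z : y \in within e n x -> e y z -> z \in within e n.+1 x.
Proof. by move=> hy hyz; rewrite withinS; apply/orP; right; apply/existsP; exists y; rewrite hy. Qed.

Lemma within_trans n m p q z : q \in within e m p -> z \in within e n q ->
  z \in within e (n + m) p.
Proof.
move=> hq; elim: n z => [|n IH] z; first by rewrite within0 => /eqP ->.
rewrite withinS => /orP [/IH h|/existsP [w /andP [hw hwz]]].
  by apply: (within_mono _ h); rewrite addSn.
by rewrite addSn; apply: (within_step (IH _ hw) hwz).
Qed.

Lemma layerE i x y : (y \in layer e i x) =
  (y \in within e i x) && ((i == 0)%N || (y \notin within e i.-1 x)).
Proof. by rewrite inE. Qed.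

Lemma layer0 x y : (y \in layer e 0 x) = (y == x).
Proof. by rewrite layerE within0 eqxx /= andbT. Qed.

Lemma layerS i x y : (y \in layer e i.+1 x) =
  (y \in within e i.+1 x) && (y \notin within e i x).
Proof. by rewrite layerE. Qed.

Lemma walk_down i x y : y \in layer e i.+1 x -> exists z, z \in layer e i x /\ e z y.
Proof.
rewrite layerS withinS => /andP [/orP [-> //|/existsP [z /andP [hz hzy]]] hny].
exists z; split => //; case: i hz hzy hny => [|i] hz hzy hny.
  by rewrite layer0 -within0.
rewrite layerS hz /=; apply/negP => hz'.
by move: hny; rewrite (within_step hz' hzy).
Qed.

Lemma down i j x y : y \in layer e i x -> (j <= i)%N -> exists z, z \in layer e j x.
Proof.
elim: i y => [|i IH] y hy.
  by rewrite leqn0 => /eqP ->; exists y.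
rewrite leq_eqVlt => /orP [/eqP ->|]; first by exists y.
rewrite ltnS; case: (walk_down hy) => z [hz _]; exact: IH hz.
Qed.

Lemma layer_uniq i j x y : y \in layer e i x -> y \in layer e j x -> i = j.
Proof.
wlog ij : i j / (i <= j)%N.
  move=> W hi hj; case: (leqP i j) => h; first exact: W.
  by symmetry; apply: W => //; apply: ltnW.
move=> hi; rewrite leq_eqVlt in ij; case/orP: ij => [/eqP //|ij].
case: j ij => // j; rewrite ltnS => ij.
rewrite layerS => /andP [_ /negP []].
move: hi; rewrite layerE => /andP [h _]; exact: within_mono h.
Qed.

Hypotheses (esym : symmetric e) (eirr : irreflexive e).

Lemma nbr_layers i x y z : (1 <= i)%N -> y \in layer e i x -> e y z ->
  [|| z \in layer e i.-1 x, z \in layer e i x | z \in layer e i.+1 x].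
Proof.
case: i => // i _ hy hyz; rewrite /=.
have hy' := hy; rewrite layerS in hy'; case/andP: hy' => hyw hyn.
have hz2 : z \in within e i.+2 x by apply: within_step hyw hyz.
case hz1: (z \in within e i.+1 x); last by rewrite (layerS i.+1) hz2 hz1 !orbT.
case hz0: (z \in within e i x); last by rewrite (layerS i) hz1 hz0 orbT.
apply/orP; left; case: i hy hyw hyn hz2 hz1 hz0 => [|i] hy hyw hyn hz2 hz1 hz0.
  by rewrite layerE hz0.
rewrite layerS hz0 /=; apply/negP => hz.
rewrite esym in hyz.
by move: hyn; rewrite (within_step hz hyz).
Qed.

Lemma deg_layer1 y : [set z in layer e 1 y | e y z] = [set z | e y z].
Proof.
apply/setP => z; rewrite !inE; case hyz: (e y z); rewrite ?andbF ?andbT //.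
have -> : z != y by apply/negP => /eqP zy; move: hyz; rewrite zy eirr.
rewrite orbT andbT; apply/orP; right; apply/existsP; exists y; by rewrite inE eqxx hyz.
Qed.

Lemma mem_sel j x y z : (z \in [set z in layer e j x | e y z]) = (z \in layer e j x) && e y z.
Proof. set L := layer e j x; by rewrite !inE. Qed.

Lemma mem_nb y z : (z \in [set z | e y z]) = e y z.
Proof. by rewrite inE. Qed.

Lemma deg_sum i x y : (1 <= i)%N -> y \in layer e i x ->
  #|[set z | e y z]| = (#|[set z in layer e i.-1 x | e y z]| +
     #|[set z in layer e i x | e y z]| + #|[set z in layer e i.+1 x | e y z]|)%N.
Proof.
move=> i1 hy.
set A := [set z in layer e i.-1 x | e y z].
set B := [set z in layer e i x | e y z].
set C := [set z in layer e i.+1 x | e y z].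
have NE : [set z | e y z] = A :|: B :|: C.
  apply/setP => z; rewrite !in_setU !mem_sel mem_nb; case hyz: (e y z); rewrite ?andbF ?andbT //=.
  by rewrite -orbA; symmetry; apply: nbr_layers hyz.
have dis : forall j k, j <> k -> [set z in layer e j x | e y z] :&: [set z in layer e k x | e y z] = set0.
  move=> j k jk; apply/setP => z; rewrite in_setI !mem_sel in_set0.
  apply/negP => /andP [/andP [h1 _] /andP [h2 _]]; apply: jk; exact: layer_uniq h1 h2.
have h1 : i.-1 <> i by rewrite -{2}(prednK i1); lia.
have h2 : i.-1 <> i.+1 by lia.
have h3 : i <> i.+1 by lia.
have AB : A :&: B = set0 by apply: dis.
have ABC : (A :|: B) :&: C = set0.
  by rewrite setIUl /A /B /C dis ?dis ?set0U.
rewrite NE -[#|_ :|: C|]addn0 -(cards0 T) -ABC cardsUI.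
by rewrite -[#|A :|: B|]addn0 -(cards0 T) -AB cardsUI.
Qed.

Lemma layer1_nb y z : z \in layer e 1 y -> e y z.
Proof.
rewrite layerS withinS within0 => /andP [/orP [/eqP -> |/existsP [w /andP [hw hwz]]]].
  by rewrite eqxx.
by move: hw; rewrite within0 => /eqP <-.
Qed.

Lemma nb_layer1 y z : e y z -> z \in layer e 1 y.
Proof. move=> h; have : z \in [set z in layer e 1 y | e y z] by rewrite deg_layer1 mem_nb. by rewrite mem_sel => /andP []. Qed.

End G.

Lemma drg_facts (T : finType) (e : rel T) D a b c :
  is_drg e D a b c -> (3 <= D)%N -> a 1%N != 0%N ->
  [/\ a 0%N = 0%N, c 1%N = 1%N, b 0%N = (c 1 + a 1 + b 1)%N,
      b 0%N = (c 2 + a 2 + b 2)%N & (0 < a 2)%N].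
Proof.
case=> esym [eirr [conn [[x0 [y0 hy0]] [c0 [bD cnt]]]]] D3 a1.
have D1 : (1 <= D)%N by lia.
have D2 : (2 <= D)%N by lia.
have deg : forall y, b 0%N = #|[set z | e y z]|.
  move=> y; case: (cnt 0%N y y (leq0n _)); first by rewrite layer0.
  by move=> _ _ <-; rewrite deg_layer1.
have degi : forall i x y, (1 <= i <= D)%N -> y \in layer e i x ->
    b 0%N = (c i + a i + b i)%N.
  move=> i x y /andP [i1 iD] hy; rewrite (deg y) (deg_sum esym i1 hy).
  by case: (cnt i x y iD hy) => -> -> ->.
case: (down hy0 D1) => y1 hy1.
case: (down hy0 D2) => y2 hy2.
split.
- case: (cnt 0%N x0 x0 (leq0n _)); first by rewrite layer0.
  move=> _ <- _; apply/eqP; rewrite cards_eq0; apply/eqP/setP => z.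
  rewrite mem_sel layer0 in_set0; apply/negP => /andP [/eqP -> ].
  by rewrite eirr.
- case: (cnt 1%N x0 y1 D1 hy1) => <- _ _.
  apply: etrans (cards1 x0); apply: eq_card => z.
  rewrite mem_sel layer0 in_set1; case zx: (z == x0); rewrite //=.
  by rewrite (eqP zx) esym; apply: layer1_nb.
- by apply: (degi 1%N x0 y1) => //; rewrite D1.
- by apply: (degi 2%N x0 y2) => //; rewrite D2.
case: (down hy0 D3) => X0 hX0.
case: (walk_down hX0) => X1 [hX1 e10].
case: (walk_down hX1) => q [hq eq1].
have hX0' : X0 \in layer e 1 X1 by apply: nb_layer1.
case: (cnt 1%N X1 X0 D1 hX0') => _ ha1 _.
case: (set_0Vmem [set z in layer e 1 X1 | e X0 z]) => [h0|[w]].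
  by move: a1; rewrite -ha1 h0 cards0.
rewrite mem_sel => /andP [/layer1_nb e1w e0w].
have X1w2 : X1 \in within e 2 x0 by move: hX1; rewrite layerS => /andP [].
have X0n2 : X0 \notin within e 2 x0 by move: hX0; rewrite layerS => /andP [].
have q1 : q \in within e 1 x0 by move: hq; rewrite layerS => /andP [].
have w3 : w \in within e 3 x0 by apply: within_step X1w2 e1w.
have wn1 : w \notin within e 1 x0.
  have ew0 : e w X0 by rewrite esym.
  by apply/negP => hw; move: X0n2; rewrite (within_step hw ew0).
case hw2: (w \in within e 2 x0).
  have hw : w \in layer e 2 x0 by rewrite layerS hw2 wn1.
  case: (cnt 2%N x0 X1 D2 hX1) => _ <- _.
  by apply/card_gt0P; exists w; rewrite mem_sel hw e1w.
have X1q : X1 \in within e 1 q by apply: (within_step (n:=0) (y:=q)) => //; rewrite within0.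
have hX0q : X0 \in layer e 2 q.
  rewrite layerS (within_step X1q e10) andTb; apply/negP => h.
  by move: X0n2; rewrite (within_trans q1 h).
have hwq : w \in layer e 2 q.
  rewrite layerS (within_step X1q e1w) andTb; apply/negP => h.
  by move: hw2; rewrite (within_trans q1 h).
case: (cnt 2%N q X0 D2 hX0q) => _ <- _.
by apply/card_gt0P; exists w; rewrite mem_sel hwq e0w.
Qed.

Local Open Scope ring_scope.
Lemma prod0 (R : idomainType) (x y : R) : x * y = 0 -> x = 0 \/ y = 0.
Proof. by move/eqP; rewrite mulf_eq0 => /orP [] /eqP; [left|right]. Qed.

Lemma alg (R : realFieldType) (k a1 b1 c2 a2 b2 s t s3 u v u3 eps : R) :
  k = 1 + a1 + b1 -> k = c2 + a2 + b2 -> 0 < a1 -> 0 < a2 -> 0 <= b1 ->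
  0 <= b2 -> 0 <= c2 -> s != 1 -> u != 1 ->
  1 + a1 * s + b1 * t = k * s * s ->
  1 + a1 * u + b1 * v = k * u * u ->
  1 + a1 * (s * u) + b1 * (t * v) = k * (s * u) * (s * u) ->
  c2 * s + a2 * t + b2 * s3 = k * s * t ->
  c2 * u + a2 * v + b2 * u3 = k * u * v ->
  c2 * (s * u) + a2 * (t * v) + b2 * (s3 * u3) = k * (s * u) * (t * v) ->
  s * u - 1 = eps * (u - s) ->
  t * v - s * u = eps * (s * v - t * u) ->
  [/\ t != 1, eps * s != 1, t != eps * s & t != s ^+ 2].
Proof.
move=> hk1 hk2 ha1 ha2 hb1 hb2 hc2 /eqP hs1 /eqP hu1 A B C S2 U2 P2 E1 E2.
have hu0 : u != 0.
  apply/eqP => u0; subst u.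
  have hv : b1 * v = -1 by lra.
  have ht : t = 1.
    have : (b1 * v) * (t - 1) = 0 by nra.
    by move/prod0 => [|]; [rewrite hv => /eqP; rewrite oppr_eq0 oner_eq0|lra].
  subst t.
  have : (a2 * v) * (s3 - 1) = 0.
    have e1 : b2 * u3 = - (a2 * v) by lra.
    have e2 : b2 * (s3 * u3) = - (a2 * v) by lra.
    have : s3 * (b2 * u3) = b2 * (s3 * u3) by ring.
    rewrite e1 e2 => h. lra.
  move/prod0 => [/prod0 [|]|].
  - lra.
  - move=> v0; move: hv; rewrite v0; lra.
  - move=> h3; have : s3 = 1 by lra.
    move=> s31; subst s3.
    have : (a2 + b2) * (s - 1) = 0 by nra.
    move/prod0 => [|]; lra.
have hii : eps * s != 1.
  apply/eqP => es1.
  have : u * (s - eps) = 0 by nra.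
  move/prod0 => [u0|]; first by move: hu0; rewrite u0 eqxx.
  move=> se; have se' : s = eps by lra.
  subst eps.
  have sm1 : s = -1.
    have : (s - 1) * (s + 1) = 0 by nra.
    move/prod0 => [|]; lra.
  subst s.
  have bt : b1 * (t - 1) = 2 * a1 by nra.
  have vu : v = u.
    have : (t - 1) * (v - u) = 0 by nra.
    move/prod0 => [|]; nra.
  subst v.
  have ku : k * u = -1.
    have : (1 - u) * (1 + k * u) = 0 by nra.
    move/prod0 => [|]; lra.
  have es3 : b2 * s3 = c2 - a2 * t - k * t by nra.
  have eu3 : b2 * u3 = - u * (1 + c2 + a2) by nra.
  have h : k * (-1 * u) * (t * u) = t * u.
    transitivity (- (k * u) * (t * u)); first by ring.
    by rewrite ku; ring.
  have H2 : b2 * (s3 * u3) = t * u - c2 * (-1 * u) - a2 * (t * u).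
    by move: P2; rewrite h => P; rewrite -{1}P; ring.
  have P2' : - (b2 * c2 * u) + b2 * a2 * t * u + (b2 * s3) * (b2 * u3) = b2 * t * u.
    have -> : (b2 * s3) * (b2 * u3) = b2 * (b2 * (s3 * u3)) by ring.
    rewrite H2; ring.
  rewrite es3 eu3 in P2'.
  have : u * ((k + 1) * (t * (c2 + 2 * a2) - c2)) = 0.
    rewrite hk2 in P2' *. nra.
  move/prod0 => [u0|]; first by move: hu0; rewrite u0 eqxx.
  move/prod0 => [|]; first lra.
  have t1 : 1 < t by nra.
  nra.
split => //.
- apply/eqP => t1; subst t.
  have ka : k * (s + 1) = a1.
    have : (s - 1) * (k * (s + 1) - a1) = 0 by nra.
    move/prod0 => [|]; lra.
  have : u * (s - 1) * (a1 - k * u * (s + 1)) = 0 by nra.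
  move/prod0 => [/prod0 [u0|]|]; first by move: hu0; rewrite u0 eqxx.
    lra.
  move=> h; have : a1 * u * (1 - u) = 0 by nra.
  move/prod0 => [/prod0 [|u0]|]; [lra| by move: hu0; rewrite u0 eqxx | lra].
- apply/eqP => tes; subst t.
  have : u * (s * (1 - eps) * (1 + eps)) = 0 by nra.
  move/prod0 => [u0|]; first by move: hu0; rewrite u0 eqxx.
  move/prod0 => [/prod0 [s0|]|].
  + subst s; nra.
  + move=> e1; have e1' : eps = 1 by lra. subst eps.
    have : (s - 1) * (u + 1) = 0 by nra.
    move/prod0 => [|] h; first lra.
    have um : u = -1 by lra. subst u.
    have ks : k * s = -1.
      have : (1 - s) * (1 + k * s) = 0 by nra.
      move/prod0 => [|]; lra.
    have s0 : s != 0 by apply/eqP => s0; rewrite s0 mulr0 in ks; lra.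
    have bv : b1 * (v - 1) = 2 * a1 by lra.
    have es3 : b2 * s3 = - s * (1 + c2 + a2) by nra.
    have eu3 : b2 * u3 = c2 - (a2 + k) * v by nra.
    have hh : k * (s * -1) * (1 * s * v) = s * v.
      transitivity (- (k * s) * (s * v)); first by ring.
      by rewrite ks; ring.
    have H2 : b2 * (s3 * u3) = s * v - c2 * (s * -1) - a2 * (1 * s * v).
      by move: P2; rewrite hh => P; rewrite -{1}P; ring.
    have P2' : (b2 * s3) * (b2 * u3) = b2 * (s * v - c2 * (s * -1) - a2 * (1 * s * v)).
      by rewrite -H2; ring.
    rewrite es3 eu3 in P2'.
    have : s * ((k + 1) * (v * (c2 + 2 * a2) - c2)) = 0.
      rewrite hk2 in P2' *. nra.
    move/prod0 => [s00|]; first by move: s0; rewrite s00 eqxx.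
    move/prod0 => [|]; first lra.
    have v1 : 1 < v by nra.
    nra.
  + move=> e1; have e1' : eps = -1 by lra. subst eps.
    have : (s + 1) * (u - 1) = 0 by nra.
    move/prod0 => [|] h; last lra.
    have sm : s = -1 by lra. subst s.
    nra.
- apply/eqP => ts; subst t.
  have hs : (1 + a1) * s = -1.
    have : (1 - s) * (1 + (1 + a1) * s) = 0 by nra.
    move/prod0 => [|]; lra.
  have s0 : s != 0 by apply/eqP => s0; rewrite s0 in hs; lra.
  have se : s - eps != 0.
    apply/eqP => se; have : s = eps by lra.
    move=> see; subst eps.
    have : (s - 1) * (s + 1) = 0.
      have : u * (s - s) = 1 - s * s by nra.
      rewrite subrr mulr0 => h; nra.
    move/prod0 => [|]; nra.
  have E1' : u * (s - eps) = 1 - eps * s by nra.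
  have E2' : v * (s - eps) = u * (1 - eps * s).
    have : s * (v * (s - eps) - u * (1 - eps * s)) = 0 by nra.
    move/prod0 => [h|]; [by move: s0; rewrite h eqxx|lra].
  have vu : v = u ^+ 2.
    apply: (mulIf se). rewrite E2' -E1'. ring.
  subst v.
  have hu : (1 + a1) * u = -1.
    have : (1 - u) * (1 + (1 + a1) * u) = 0 by nra.
    move/prod0 => [|]; lra.
  have us : u = s.
    have : (1 + a1) * (u - s) = 0 by lra.
    move/prod0 => [|]; lra.
  subst u.
  have : (1 - s ^+ 2) * (1 + (1 + a1) * s ^+ 2) = 0 by nra.
  move/prod0 => [|]; nra.
Qed.

Theorem lemma12p4 (R : realType) (T : finType) (e : rel T) (D : nat)
    (a b c : nat -> nat) (sigma : nat -> R) (eps : R) :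
  is_drg e D a b c -> (3 <= D)%N -> a 1%N != 0%N ->
  tight_with_aux D a b c sigma eps ->
  [/\ sigma 2%N != 1, eps * sigma 1%N != 1, sigma 2%N != eps * sigma 1%N
    & sigma 2%N != sigma 1%N ^+ 2].
Proof.
move=> drg D3 a1 [[[th [s0 hs]] hs1] [r [[[thr [r0 hr]] hr1] [[_ [_ [thp [p0 hp]]]] aux]]]].
case: (drg_facts drg D3 a1) => a0 c1 kb1 kb2 a2p.
have c0 : c 0%N = 0%N by case: drg => [_ [_ [_ [_ [-> _]]]]].
have D0 : (0 < D)%N by lia.
have D1 : (1 < D)%N by lia.
have D2 : (2 < D)%N by lia.
have the : th = (b 0%N)%:R * sigma 1%N.
  by move: (hs 0%N D0) => /=; rewrite c0 a0 s0 !mul0r !add0r !mulr1.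
have thre : thr = (b 0%N)%:R * r 1%N.
  by move: (hr 0%N D0) => /=; rewrite c0 a0 r0 !mul0r !add0r !mulr1.
have thpe : thp = (b 0%N)%:R * (sigma 1%N * r 1%N).
  by move: (hp 0%N D0) => /=; rewrite c0 a0 r0 s0 !mul0r !add0r !mulr1.
have hs1' := hs 1%N D1; have hs2 := hs 2%N D2.
have hr1' := hr 1%N D1; have hr2 := hr 2%N D2.
have hp1 := hp 1%N D1; have hp2 := hp 2%N D2.
have au1 := aux 1%N (ltac:(lia)); have au2 := aux 2%N (ltac:(lia)).
simpl in hs1', hs2, hr1', hr2, hp1, hp2, au1, au2.
rewrite c1 s0 ?r0 the in hs1'.
rewrite c1 r0 thre in hr1'.
rewrite c1 s0 r0 thpe in hp1.
rewrite the in hs2. rewrite thre in hr2. rewrite thpe in hp2.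
rewrite s0 r0 in au1.
apply: (@alg R (b 0%N)%:R (a 1%N)%:R (b 1%N)%:R (c 2%N)%:R (a 2%N)%:R (b 2%N)%:R
   (sigma 1%N) (sigma 2%N) (sigma 3%N) (r 1%N) (r 2%N) (r 3%N) eps).
- by rewrite kb1 c1 !natrD.
- by rewrite kb2 !natrD.
- by rewrite ltr0n lt0n.
- by rewrite ltr0n.
- exact: ler0n.
- exact: ler0n.
- exact: ler0n.
- exact: hs1.
- exact: hr1.
- by rewrite -hs1'; ring.
- by rewrite -hr1'; ring.
- by rewrite -hp1; ring.
- by rewrite -hs2; ring.
- by rewrite -hr2; ring.
- by rewrite -hp2; ring.
- by move: au1; rewrite !mul1r !mulr1.
- by rewrite au2.
Qed.
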